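(* Let $L^x,L^y>0$, let $i\neq j$ be two boxes, each box $k\in\{i,j\}$ having center $(c^x_k,c^y_k)$, side lengths $(\ell^x_k,\ell^y_k)$, area $\alpha_k>0$ and constants $lb^s_k,ub^s_k$. Let $$Q^{FLP}=\{(c_i,c_j,\ell_i,\ell_j)\in\mathbb{R}^8:\ \tfrac12\ell^s_k\le c^s_k\le L^s-\tfrac12\ell^s_k,\ lb^s_k\le\ell^s_k\le ub^s_k,\ \ell^x_k\ell^y_k\ge\alpha_k\ \ \forall s\in\{x,y\},k\in\{i,j\}\}.$$ Let $E^U$ be the set of $(c,\ell,u)$ with $(c,\ell)=(c_i,c_j,\ell_i,\ell_j)\in Q^{FLP}$, $u=(u^s_{p,q})_{s\in\{x,y\},(p,q)\in\{(i,j),(j,i)\}}\in\{0,1\}^4$ having exactly one entry equal to $1$, and $u^s_{p,q}=1\Rightarrow\mathscr{B}_p\leftarrow_s\mathscr{B}_q$. Let $E^8$ be the set of $(c,\ell,z)$ with $(c,\ell)\in Q^{FLP}$, $z=(z^s_{p,q})\in\{0,1\}^4$ not identically zero, $z^s_{i,j}+z^s_{j,i}\le1$ for each $s$, $z^s_{p,q}=1\Rightarrow\mathscr{B}_p\leftarrow_s\mathscr{B}_q$, and $z^s_{i,j}=z^s_{j,i}=0\Rightarrow(\mathscr{B}_i\not\leftarrow_s\mathscr{B}_j$ and $\mathscr{B}_j\not\leftarrow_s\mathscr{B}_i)$. Suppose $a,b\in\mathbb{R}^4$, $\delta=(\delta^s_{p,q})\in\mathbb{R}^4$ and $f\in\mathbb{R}$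 are such that $a^Tc+b^T\ell+\delta^Tu\le f$ for all $(c,\ell,u)\in E^U$. If $\delta^y_{i,j}=\delta^y_{j,i}=0$ or $\delta^x_{i,j}=\delta^x_{j,i}=0$, then $a^Tc+b^T\ell+\delta^Tz\le f$ for all $(c,\ell,z)\in E^8$ (with $\delta^s_{p,q}$ multiplying $z^s_{p,q}$).
   Context: $\mathscr{B}_p\leftarrow_s\mathscr{B}_q$ means $c^s_p+\tfrac12\ell^s_p\le c^s_q-\tfrac12\ell^s_q$, and $\mathscr{B}_p\not\leftarrow_s\mathscr{B}_q$ means $c^s_p+\tfrac12\ell^s_p\ge c^s_q-\tfrac12\ell^s_q$. $E^U$ and $E^8$ are the paper's embeddings $\operatorname{Em}(Q^{FLP},D^4,U^4)$ and $\operatorname{Em}(Q^{FLP},D^8,C^8)$. In the paper $ub^s_k=\min\{\sqrt{\alpha_k\beta_k},L^s\}$, $lb^s_k=\beta_k/ub^s_k$. *)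

(* Defs.v *)
From Stdlib Require Import Reals.
Open Scope R_scope.

Inductive dir := DX | DY.
Inductive box := BI | BJ.

Definition other (k : box) : box := match k with BI => BJ | BJ => BI end.

Definition before (c l : dir -> box -> R) (s : dir) (p q : box) : Prop :=
  c s p + l s p / 2 <= c s q - l s q / 2.

Definition not_before (c l : dir -> box -> R) (s : dir) (p q : box) : Prop :=
  c s p + l s p / 2 >= c s q - l s q / 2.

Definition in_QFLP (L : dir -> R) (alpha : box -> R) (lb ub : dir -> box -> R)
  (c l : dir -> box -> R) : Prop :=
  forall (s : dir) (k : box),
    l s k / 2 <= c s k <= L s - l s k / 2 /\
    lb s k <= l s k <= ub s k /\
    l DX k * l DY k >= alpha k.

Definition sum4 (f : dir -> box -> R) : R :=
  f DX BI + f DX BJ + f DY BI + f DY BJ.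

(* Variables indexed by (s, p) stand for the entry with ordered pair (p, other p). *)
Definition objective (a b delta : dir -> box -> R) (c l u : dir -> box -> R) : R :=
  sum4 (fun s k => a s k * c s k) + sum4 (fun s k => b s k * l s k)
  + sum4 (fun s p => delta s p * u s p).

Definition binary (u : dir -> box -> R) : Prop :=
  forall s p, u s p = 0 \/ u s p = 1.

Definition in_EU (L : dir -> R) (alpha : box -> R) (lb ub : dir -> box -> R)
  (c l u : dir -> box -> R) : Prop :=
  in_QFLP L alpha lb ub c l /\
  binary u /\
  (exists s p, u s p = 1 /\ forall s' p', (s', p') <> (s, p) -> u s' p' = 0) /\
  (forall s p, u s p = 1 -> before c l s p (other p)).

Definition in_E8 (L : dir -> R) (alpha : box -> R) (lb ub : dir -> box -> R)
  (c l z : dir -> box -> R) : Prop :=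
  in_QFLP L alpha lb ub c l /\
  binary z /\
  ~ (forall s p, z s p = 0) /\
  (forall s, z s BI + z s BJ <= 1) /\
  (forall s p, z s p = 1 -> before c l s p (other p)) /\
  (forall s, z s BI = 0 -> z s BJ = 0 ->
     not_before c l s BI BJ /\ not_before c l s BJ BI).

(* Main.v *)
Require Import Defs.
From Stdlib Require Import Reals Lra.
Open Scope R_scope.

Definition eqd (s s' : dir) : bool :=
  match s, s' with DX, DX | DY, DY => true | _, _ => false end.
Definition eqbx (p p' : box) : bool :=
  match p, p' with BI, BI | BJ, BJ => true | _, _ => false end.
Definition onehot (s : dir) (p : box) : dir -> box -> R :=
  fun s' p' => if andb (eqd s s') (eqbx p p') then 1 else 0.

Lemma onehot_EU L alpha lb ub c l s p :
  in_QFLP L alpha lb ub c l -> before c l s p (other p) ->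
  in_EU L alpha lb ub c l (onehot s p).
Proof.
  intros HQ HB. split; [exact HQ|]. split.
  { intros s' p'; unfold onehot; destruct (andb _ _); auto. }
  split.
  { exists s, p. split.
    - unfold onehot; destruct s, p; reflexivity.
    - intros s' p' Hne; destruct s, p, s', p'; simpl; try reflexivity;
      exfalso; apply Hne; reflexivity. }
  intros s' p' H; destruct s, p, s', p'; unfold onehot in H; simpl in H;
    try exact HB; lra.
Qed.

Lemma obj_onehot a b delta c l s p :
  objective a b delta c l (onehot s p) =
  sum4 (fun s k => a s k * c s k) + sum4 (fun s k => b s k * l s k) + delta s p.
Proof. destruct s, p; unfold objective, sum4, onehot; simpl; ring. Qed.

Theorem proposition6p2 (L : dir -> R) (alpha : box -> R) (lb ub : dir -> box -> R)
  (a b delta : dir -> box -> R) (f : R) :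
  (forall s, 0 < L s) ->
  (forall k, 0 < alpha k) ->
  (forall c l u, in_EU L alpha lb ub c l u -> objective a b delta c l u <= f) ->
  ((delta DY BI = 0 /\ delta DY BJ = 0) \/ (delta DX BI = 0 /\ delta DX BJ = 0)) ->
  forall c l z, in_E8 L alpha lb ub c l z -> objective a b delta c l z <= f.
Proof.
  intros _ _ HU Hd c l z [Q [Bin [NZ [Sum [Bef _]]]]].
  pose proof (Sum DX) as SX. pose proof (Sum DY) as SY.
  assert (G : forall s p, z s p = 1 ->
    sum4 (fun s k => a s k * c s k) + sum4 (fun s k => b s k * l s k) + delta s p <= f).
  { intros s p Hz. rewrite <- obj_onehot. apply HU. apply onehot_EU; auto. }
  pose proof (G DX BI) as G1. pose proof (G DX BJ) as G2.
  pose proof (G DY BI) as G3. pose proof (G DY BJ) as G4.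
  unfold objective, sum4 in *.
  destruct (Bin DX BI) as [e1|e1], (Bin DX BJ) as [e2|e2],
           (Bin DY BI) as [e3|e3], (Bin DY BJ) as [e4|e4];
  rewrite ?e1, ?e2, ?e3, ?e4 in *;
  try (exfalso; apply NZ; intros [] []; assumption);
  try lra;
  destruct Hd as [[d1 d2]|[d1 d2]]; rewrite ?d1, ?d2 in *;
  first [ specialize (G1 eq_refl); lra | specialize (G2 eq_refl); lra
        | specialize (G3 eq_refl); lra | specialize (G4 eq_refl); lra ].
Qed.
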